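(* Let $I$ be a connected and locally connected topological space and $h:I\to\mathbb{R}$ a positive continuous function attaining its lower bound at $v\in I$. For $y,z\in I$ define $$\lambda(y,z)=\sup\{\lambda : C_{y,\lambda}=C_{z,\lambda},\ \lambda\le h(y),\ \lambda\le h(z)\},\qquad d(y,z)=h(y)+h(z)-2\lambda(y,z).$$ Then $d$ is a pseudo-metric on $I$. Moreover, if $(\tilde I,\tilde d)$ is the quotient metric space obtained by identifying points $x,y$ with $d(x,y)=0$ (with $\tilde d$ the metric induced by $d$), then the canonical projection $i:I\to\tilde I$ from the topological space $I$ to the metric space $(\tilde I,\tilde d)$ is continuous.
   Context: For $x\in I$ and $\lambda\le h(x)$, $C_{x,\lambda}$ denotes the maximal connected subset of $\{y\in I: h(y)\ge\lambda\}$ containing $x$. *)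

(* Defs.v *)
From HB Require Import structures.
From mathcomp Require Import all_boot all_order all_algebra.
From mathcomp Require Import all_classical all_reals topology normedtype.
Set Implicit Arguments. Unset Strict Implicit. Unset Printing Implicit Defensive.
Import Order.TTheory GRing.Theory Num.Theory numFieldNormedType.Exports.
Local Open Scope classical_set_scope.
Local Open Scope ring_scope.

Definition locally_connected (T : topologicalType) : Prop :=
  forall (x : T) (U : set T), nbhs x U ->
    exists V : set T, [/\ open V, connected V, V x & V `<=` U].

Definition Ccomp (R : realType) (T : topologicalType) (h : T -> R)
  (x : T) (lam : R) : set T :=
  connected_component [set y | lam <= h y] x.

Definition lam (R : realType) (T : topologicalType) (h : T -> R) (y z : T) : R :=
  sup [set l : R | [/\ Ccomp h y l = Ccomp h z l, l <= h y & l <= h z]].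

Definition hdist (R : realType) (T : topologicalType) (h : T -> R) (y z : T) : R :=
  h y + h z - 2 * lam h y z.

(* Main.v *)
Require Import Defs.
From HB Require Import structures.
From mathcomp Require Import all_boot all_order all_algebra.
From mathcomp Require Import all_classical all_reals topology normedtype.
From mathcomp Require Import lra.
Import Order.TTheory GRing.Theory Num.Theory numFieldNormedType.Exports.
Local Open Scope classical_set_scope.
Local Open Scope ring_scope.

Section Aux.
Variables (R : realType) (T : topologicalType) (h : T -> R) (v : T).
Hypothesis cT : connected [set: T].
Hypothesis hv : forall x, h v <= h x.

Definition SS y z := [set l : R | [/\ Ccomp h y l = Ccomp h z l, l <= h y & l <= h z]].

Lemma SS_down y z l l' : SS y z l -> l' <= l -> SS y z l'.
Proof.
move=> [E ly lz] ll'.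
have Cz : Ccomp h y l z.
  by rewrite E; apply: connected_component_refl.
have sub : Ccomp h y l `<=` Ccomp h y l'.
  apply: connected_component_max.
  - exact: connected_component_refl.
  - move=> w /connected_component_sub /= lw; exact: le_trans ll' lw.
  - exact: component_connected.
split; [|exact: le_trans ll' ly|exact: le_trans ll' lz].
exact: same_connected_component (sub _ Cz).
Qed.

Lemma SS_v y z : SS y z (h v).
Proof.
have eT : [set w | h v <= h w] = [set: T].
  by apply/seteqP; split => w //= _.
split => //; rewrite /Ccomp eT !connected_component_id //.
Qed.

Lemma SS_has_sup y z : has_sup (SS y z).
Proof. split; first by exists (h v); exact: SS_v.
by exists (h y) => l [].
Qed.

Lemma lam_ge y z l : SS y z l -> l <= lam h y z.
Proof. by move=> Sl; apply: (sup_upper_bound (SS_has_sup y z)). Qed.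

Lemma lam_le1 y z : lam h y z <= h y.
Proof. by apply: ge_sup; [exists (h v); exact: SS_v | move=> l []]. Qed.

Lemma lam_le2 y z : lam h y z <= h z.
Proof. by apply: ge_sup; [exists (h v); exact: SS_v | move=> l []]. Qed.

Lemma lam_lt y z l : l < lam h y z -> SS y z l.
Proof.
move=> ll.
have d0 : 0 < lam h y z - l by rewrite subr_gt0.
have [e Se He] := sup_adherent d0 (SS_has_sup y z).
apply: SS_down Se _; rewrite /lam in ll He *; lra.
Qed.

Lemma lam_sym y z : lam h y z = lam h z y.
Proof.
rewrite /lam; congr sup; apply/seteqP; split => l [? ? ?]; by split.
Qed.

Lemma lam_refl y : lam h y y = h y.
Proof.
apply/eqP; rewrite eq_le lam_le1 /=; apply: lam_ge; by split.
Qed.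

Lemma lam_ultra x y z : Num.min (lam h x y) (lam h y z) <= lam h x z.
Proof.
rewrite leNgt; apply/negP => H.
set m := Num.min (lam h x y) (lam h y z) in H.
set l := (lam h x z + m) / 2.
have lm : l < m by rewrite /l; lra.
have l1 : l < lam h x y by apply: (lt_le_trans lm); rewrite /m ge_min lexx.
have l2 : l < lam h y z by apply: (lt_le_trans lm); rewrite /m ge_min lexx orbT.
have [E1 a1 b1] := @lam_lt x y l l1.
have [E2 a2 b2] := @lam_lt y z l l2.
have : l <= lam h x z by apply: lam_ge; split => //; rewrite E1.
rewrite /l; lra.
Qed.

End Aux.

Theorem mainTheorem9 (R : realType) (T : topologicalType) (h : T -> R) (v : T) :
  connected [set: T] ->
  locally_connected T ->
  continuous h ->
  (forall x, 0 < h x) ->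
  (forall x, h v <= h x) ->
  (* d is a pseudo-metric *)
  ((forall x, hdist h x x = 0) /\
   (forall x y, 0 <= hdist h x y) /\
   (forall x y, hdist h x y = hdist h y x) /\
   (forall x y z, hdist h x z <= hdist h x y + hdist h y z)) /\
  (* the projection I -> (I/~, d~) is continuous *)
  (forall (x : T) (e : R), 0 < e -> \forall y \near x, hdist h x y < e).
Proof.
move=> cT lcT hc hpos hv; split; [split; [|split; [|split]]|].
- by move=> x; rewrite /hdist (lam_refl _ _ _ _ cT hv); lra.
- move=> x y; rewrite /hdist.
  have := lam_le1 _ _ _ _ cT hv x y; have := lam_le2 _ _ _ _ cT hv x y; lra.
- by move=> x y; rewrite /hdist lam_sym; lra.
- move=> x y z; rewrite /hdist.
  have u := lam_ultra _ _ _ _ cT hv x y z.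
  have a1 := lam_le2 _ _ _ _ cT hv x y; have a2 := lam_le1 _ _ _ _ cT hv y z.
  move: u; rewrite /Num.min; case: ifP => _ u; lra.
- move=> x e e0.
  have e4 : 0 < e / 4 by lra.
  have := hc x; move/cvgrPdist_lt => /(_ _ e4) nU.
  have [V [oV cV Vx VU]] := lcT x _ nU.
  have nV : nbhs x V by apply: open_nbhs_nbhs; split.
  apply: filterS nV => y Vy.
  set l := h x - e / 4.
  have Hl : forall w, V w -> l <= h w.
    move=> w /VU /= /ltr_normlP [H1 H2]; rewrite /l; lra.
  have Cy : Ccomp h x l y.
    by apply: (connected_component_max Vx) => //.
  have Sl : SS _ _ h x y l.
    split; [exact: same_connected_component Cy | rewrite /l; lra | exact: Hl].
  have := @lam_ge _ _ _ _ cT hv _ _ _ Sl.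
  have /= /ltr_normlP [H1 H2] := VU _ Vy.
  rewrite /hdist /l; lra.
Qed.
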